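(* Let $G$ be a finite (unsigned) graph. Write its chromatic symmetric function $X_G$ as a polynomial with rational coefficients in $\{\zeta_n : n\ge1\}$. Then for every $k\ge 0$, the number of acyclic orientations of $G$ with exactly $k$ sinks equals the sum of the coefficients of those monomials for which the sum of the indices $n$ of its $\zeta_n$ factors (counted with multiplicity) equals $k$.
   Context: For a finite graph $G$ with vertices $v_1,\dots,v_n$, a proper coloring is a map $\kappa:V(G)\to\{1,2,3,\dots\}$ with $\kappa(u)\ne\kappa(v)$ whenever $u,v$ are joined by an edge, and $X_G=\sum_{\kappa\text{ proper}}x_{\kappa(v_1)}\cdots x_{\kappa(v_n)}$ in commuting variables $x_1,x_2,\dots$. A sink of an orientation is a vertex with no outgoing edges. Notation: $p_a=\sum_{i\ge1}x_i^a$ and $\zeta_n=\sum_{a=1}^n\binom{n}{a}p_a$ for $n\ge1$ (equivalently $p_n=\sum_{i=1}^n\binom{n}{i}(-1)^{n-i}\zeta_i$). *)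

(* Defs.v *)
From HB Require Import structures.
From mathcomp Require Import all_boot all_order all_algebra.
From mathcomp Require Import mpoly.
Set Implicit Arguments. Unset Strict Implicit. Unset Printing Implicit Defensive.
Import Order.TTheory GRing.Theory Num.Theory.
Local Open Scope ring_scope.

Definition simple_graph (T : finType) (e : rel T) : Prop :=
  ssrbool.symmetric e /\ irreflexive e.

(* Proper colorings with colours 1..N are modelled by maps V -> 'I_N. *)
Definition proper_coloring (T : finType) (e : rel T) (N : nat)
  (kappa : {ffun T -> 'I_N}) : bool :=
  [forall u, forall v, e u v ==> (kappa u != kappa v)].

(* X_G restricted to the first N variables x_1..x_N (x_{i+1} is 'X_i). *)
Definition chromsym (T : finType) (e : rel T) (N : nat) : {mpoly rat[N]} :=
  \sum_(kappa : {ffun T -> 'I_N} | proper_coloring e kappa)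
     \prod_(v : T) 'X_(kappa v).

Definition psum (N a : nat) : {mpoly rat[N]} := \sum_(i < N) 'X_i ^+ a.

Definition zeta (N n : nat) : {mpoly rat[N]} :=
  \sum_(1 <= a < n.+1) ('C(n, a))%:R *: psum N a.

(* Evaluate Q in Q[z_1..z_M] at z_j := zeta_j (variable 'X_j of Q stands for
   zeta_{j+1}), in N variables. *)
Definition eval_zeta (M N : nat) (Q : {mpoly rat[M]}) : {mpoly rat[N]} :=
  mmap (fun c : rat => c%:MP) (fun j : 'I_M => zeta N j.+1) Q.

(* Q(zeta_1,...,zeta_M) = X_G as symmetric functions, i.e. in every finite
   number N of variables. *)
Definition represents_chromsym (T : finType) (e : rel T) (M : nat)
  (Q : {mpoly rat[M]}) : Prop :=
  forall N : nat, eval_zeta N Q = chromsym e N.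

Definition zeta_weight (M : nat) (m : 'X_{1..M}) : nat :=
  (\sum_(j < M) j.+1 * m j)%N.

Definition coef_sum_weight (M : nat) (Q : {mpoly rat[M]}) (k : nat) : rat :=
  \sum_(m <- msupp Q | zeta_weight m == k) Q@_m.

Definition orientation (T : finType) (e : rel T) (D : {set T * T}) : bool :=
  [forall x, forall y, (((x, y) \in D) ==> e x y) &&
                        (e x y ==> (((x, y) \in D) != ((y, x) \in D)))].

Definition arc_rel (T : finType) (D : {set T * T}) : rel T :=
  fun x y => (x, y) \in D.

Definition acyclic_orientation (T : finType) (e : rel T) (D : {set T * T}) : bool :=
  orientation e D &&
  [forall x, forall y, ((x, y) \in D) ==> ~~ connect (arc_rel D) y x].

Definition sinks (T : finType) (D : {set T * T}) : {set T} :=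
  [set v | [forall w, (v, w) \notin D]].

Definition num_acyclic_sinks (T : finType) (e : rel T) (k : nat) : nat :=
  #|[set D : {set T * T} | acyclic_orientation e D & #|sinks D| == k]|.

(* Main.v *)
Require Import Defs.
From HB Require Import structures.
From mathcomp Require Import all_boot all_order all_algebra.
From mathcomp Require Import mpoly.
From mathcomp Require Import ring.
Set Implicit Arguments. Unset Strict Implicit. Unset Printing Implicit Defensive.
Import Order.TTheory GRing.Theory Num.Theory.
Local Open Scope ring_scope.
Definition AD (r : {poly rat}) := exists P : {poly rat}, forall x, P.[x + 1] - P.[x] = r.[x].

Lemma AD0 : AD 0.
Proof. by exists 0 => x; rewrite !horner0 subrr. Qed.

Lemma ADD r s : AD r -> AD s -> AD (r + s).
Proof.
move=> [P hP] [P' hP']; exists (P + P') => x.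
by rewrite !hornerD -hP -hP'; ring.
Qed.

Lemma ADZ c r : AD r -> AD (c *: r).
Proof.
move=> [P hP]; exists (c *: P) => x.
by rewrite !hornerZ -hP; ring.
Qed.

Lemma AD_Xn d : AD 'X^d.
Proof.
elim/ltn_ind: d => d IH.
have : forall i : 'I_d, AD 'X^i by move=> i; apply: IH.
move=> /fin_all_exists [Pf hPf].
exists (((d.+1)%:R)^-1 *: ('X^(d.+1) - \sum_(i < d) ('C(d.+1, i))%:R *: Pf i)) => x.
rewrite !(hornerZ, hornerD, hornerN, horner_sum, hornerXn).
rewrite -mulrBr.
have -> : (x + 1) ^+ d.+1 = \sum_(i < d) x ^+ i *+ 'C(d.+1, i) + x ^+ d *+ d.+1 + x ^+ d.+1.
  by rewrite exprD1n big_ord_recr big_ord_recr /= binn binSn.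
have E : \sum_(i < d) ('C(d.+1, i)%:R *: Pf i).[x + 1]
        - \sum_(i < d) ('C(d.+1, i)%:R *: Pf i).[x]
        = \sum_(i < d) x ^+ i *+ 'C(d.+1, i).
  rewrite -sumrB; apply: eq_bigr => i _.
  move: (hPf i x); rewrite hornerXn => <-.
  by rewrite !hornerZ -mulrBr mulr_natl.
have key : forall S A B y z : rat, A - B = S -> S + y + z - A - (z - B) = y.
  by move=> S A B y z <-; ring.
rewrite key // -[x ^+ d *+ _]mulr_natl mulKf //.
by rewrite pnatr_eq0.
Qed.

Lemma AD_all r : AD r.
Proof.
rewrite -[r]coefK poly_def.
apply: (big_ind AD); [exact: AD0 | exact: ADD | move=> i _; apply/ADZ/AD_Xn].
Qed.

Lemma poly_nat_eq0 (q : {poly rat}) : (forall n : nat, q.[n%:R] = 0) -> q = 0.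
Proof.
move=> h; apply: (@roots_geq_poly_eq0 _ q [seq i%:R | i <- iota 0 (size q)]).
- by apply/allP => x /mapP [i _ ->]; apply/rootP.
- rewrite map_inj_uniq ?iota_uniq // => i j /eqP; rewrite eqr_nat => /eqP //.
- by rewrite size_map size_iota.
Qed.
Section Orient.
Variables (T : finType) (e : rel T).
Hypothesis esymm : ssrbool.symmetric e.
Implicit Types (U S : {set T}) (D : {set T * T}).

Definition indep (S : {set T}) := [forall x, forall y, (x \in S) && (y \in S) ==> ~~ e x y].

Definition orientU (U : {set T}) (D : {set T * T}) :=
  [forall x, forall y, (((x, y) \in D) ==> [&& x \in U, y \in U & e x y]) &&
     ([&& x \in U, y \in U & e x y] ==> (((x, y) \in D) != ((y, x) \in D)))].

Definition acycU (U : {set T}) (D : {set T * T}) := orientU U D &&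
  [forall x, forall y, ((x, y) \in D) ==> ~~ connect (arc_rel D) y x].

Definition aU (U : {set T}) := #|[set D | acycU U D]|.

Lemma orientUP U D : reflect
  ((forall x y, (x, y) \in D -> [/\ x \in U, y \in U & e x y]) /\
   (forall x y, x \in U -> y \in U -> e x y -> ((x, y) \in D) != ((y, x) \in D)))
  (orientU U D).
Proof.
apply: (iffP forallP) => [h|[h1 h2] x].
  split=> x y; have /forallP/(_ y)/andP[/implyP h1 /implyP h2] := h x.
    by move=> /h1 /and3P.
  by move=> xU yU exy; apply: h2; rewrite xU yU exy.
apply/forallP => y; apply/andP; split; apply/implyP.
  by move=> /h1 [-> -> ->].
by move=> /and3P [xU yU exy]; apply: h2.
Qed.

Lemma acycUP U D : reflect
  (orientU U D /\ forall x y, (x, y) \in D -> ~~ connect (arc_rel D) y x)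
  (acycU U D).
Proof.
apply: (iffP andP) => [[h1 /forallP h2]|[h1 h2]]; split => //.
  by move=> x y; have /forallP/(_ y)/implyP := h2 x; apply.
by apply/forallP => x; apply/forallP => y; apply/implyP; apply: h2.
Qed.

Lemma acycT D : acycU setT D = acyclic_orientation e D.
Proof.
rewrite /acycU /acyclic_orientation /orientU /orientation.
congr andb; apply: eq_forallb => x; apply: eq_forallb => y.
by rewrite !in_setT.
Qed.

Lemma sink_exists U D : acycU U D -> U != set0 ->
  exists2 v, v \in U & v \in sinks D.
Proof.
move=> /acycUP [/orientUP [hD _] hac] /set0Pn [v0 v0U].
pose reach v := [set y | connect (arc_rel D) v y].
case: (@arg_minnP _ v0 (mem U) (fun v => #|reach v|) v0U) => v vU vmin.
exists v => //; rewrite inE; apply/forallP => w; apply/negP => vw.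
have [_ wU _] := hD _ _ vw.
have := vmin w wU; rewrite leqNgt => /negP; apply.
apply: proper_card; apply/properP; split.
  apply/subsetP => y; rewrite !inE => /(connect_trans _); apply.
  by apply: connect1.
exists v; first by rewrite inE connect0.
by rewrite inE; apply: hac.
Qed.

Lemma pow_card_sub (t : rat) (A : {set T}) :
  t ^+ #|A| = \sum_(S : {set T} | S \subset A) (t - 1) ^+ #|S|.
Proof.
transitivity (\prod_(i in A) t); first by rewrite prodr_const.
rewrite big_mkcond /=.
transitivity (\prod_i ((if i \in A then t - 1 else 0) + 1)).
  by apply: eq_bigr => i _; case: ifP => _; rewrite ?add0r // subrK.
rewrite bigA_distr (bigID (fun J : {set T} => J \subset A)) /=.
rewrite [X in _ + X]big1 ?addr0; last first.
  move=> J /subsetPn [i iJ iA]; rewrite (bigD1 i) //= iJ (negbTE iA) mul0r //.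
apply: eq_bigr => J JA.
rewrite -(prodr_const (fun i => i \in J)) [RHS]big_mkcond /=.
apply: eq_bigr => i _; case: ifP => // iJ.
by rewrite (subsetP JA _ iJ).
Qed.

Lemma connect_avoid (D D' : {set T * T}) (S : {set T}) x y :
  (forall z w, (z, w) \in D -> z \notin S) ->
  (forall z w, (z, w) \in D -> w \notin S -> (z, w) \in D') ->
  connect (arc_rel D) y x -> x \notin S -> connect (arc_rel D') y x.
Proof.
move=> h1 h2 /connectP [p pth ->] {x}.
elim: p y pth => [|z p IH] y /=; first by move=> _ _; apply: connect0.
case/andP => yz pth hx.
have zS : z \notin S.
  case: p pth hx {IH} => [|w p] /=; first by [].
  by case/andP => zw _ _; apply: (h1 z w).
apply: (connect_trans (connect1 _)); first by apply: (h2 _ _ yz zS).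
exact: IH.
Qed.

Definition InS (U S : {set T}) : {set T * T} :=
  [set p | [&& p.1 \in U :\: S, p.2 \in S & e p.1 p.2]].

Definition restr (S : {set T}) (D : {set T * T}) : {set T * T} :=
  [set p in D | (p.1 \notin S) && (p.2 \notin S)].

Lemma bij_fwd U S D' : S \subset U -> indep S -> acycU (U :\: S) D' ->
  acycU U (D' :|: InS U S) && (S \subset sinks (D' :|: InS U S)).
Proof.
move=> SU /forallP Sind /acycUP [/orientUP [hD1 hD2] hac].
have noout : forall z w, (z, w) \in D' :|: InS U S -> z \notin S.
  move=> z w; rewrite !inE => /orP [/hD1 [] | /and3P []].
    by rewrite ?inE => /andP [].
  by rewrite ?inE => /andP [].
apply/andP; split; last first.
  apply/subsetP => s sS; rewrite inE; apply/forallP => w; apply/negP => /noout.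
  by rewrite sS.
apply/acycUP; split.
  apply/orientUP; split.
    move=> x y; rewrite !inE => /orP [/hD1 [] | /and3P [] ].
      by move=> /setDP [xU _] /setDP [yU _] exy.
    rewrite /= => /andP [_ xU] yS exy; split => //.
    exact: (subsetP SU).
  move=> x y xU yU exy; rewrite !inE /=.
  case xS: (x \in S); case yS: (y \in S) => /=.
  - by have /forallP/(_ y) := Sind x; rewrite xS yS exy.
  - have -> : (x, y) \in D' = false.
      by apply/negP => /hD1 []; rewrite inE xS.
    have -> : (y, x) \in D' = false.
      by apply/negP => /hD1 [] _; rewrite inE xS.
    by rewrite yU esymm exy.
  - have -> : (x, y) \in D' = false.
      by apply/negP => /hD1 [] _; rewrite inE yS.
    have -> : (y, x) \in D' = false.
      by apply/negP => /hD1 []; rewrite inE yS.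
    by rewrite xU exy.
  - by rewrite !andbF !orbF; apply: hD2; rewrite ?inE ?xS ?yS.
move=> x y xy.
have xS : x \notin S by apply: (noout _ _ xy).
case yS: (y \in S).
  apply/negP => /connectP [[|z p] /=].
    by move=> _ exy; move: xS; rewrite exy yS.
  by case/andP => /noout; rewrite yS.
have xyD : (x, y) \in D'.
  by move: xy; rewrite !inE yS /= andbF orbF.
apply/negP => /(connect_avoid noout) h.
have /negP := hac _ _ xyD; apply; apply: h => //.
by move=> z w; rewrite !inE => /orP [//|/and3P [_ ->]].
Qed.

Lemma bij_bwd U S D : S \subset U -> acycU U D -> S \subset sinks D ->
  [/\ indep S, acycU (U :\: S) (restr S D) & D = restr S D :|: InS U S].
Proof.
move=> SU /acycUP [/orientUP [hD1 hD2] hac] Ssink.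
have sk : forall z w, (z, w) \in D -> z \notin S.
  move=> z w zw; apply/negP => /(subsetP Ssink); rewrite inE.
  by move=> /forallP /(_ w); rewrite zw.
split.
- apply/forallP => x; apply/forallP => y; apply/implyP => /andP [xS yS].
  apply/negP => exy.
  have := hD2 x y (subsetP SU _ xS) (subsetP SU _ yS) exy.
  have /negbTE -> : (x, y) \notin D by apply/negP => /sk; rewrite xS.
  have /negbTE -> : (y, x) \notin D by apply/negP => /sk; rewrite yS.
  by [].
- apply/acycUP; split.
    apply/orientUP; split.
      move=> x y; rewrite !inE /= => /andP [/hD1 [xU yU exy] /andP [xS yS]].
      by rewrite xS yS xU yU.
    move=> x y; rewrite !inE /= => /andP [xS xU] /andP [yS yU] exy.
    by rewrite xS yS /= !andbT; apply: hD2.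
  move=> x y; rewrite inE /= => /andP [xy _].
  apply/negP => /(connect_sub _) h; have /negP := hac _ _ xy; apply; apply: h.
  by move=> a b; rewrite /arc_rel inE => /andP [ab _]; apply: connect1.
- apply/setP => [[x y]]; rewrite !inE /=.
  case xyD: ((x, y) \in D) => /=.
    have [xU yU exy] := hD1 _ _ xyD.
    have xS := sk _ _ xyD; rewrite xS /=.
    by case: (y \in S); rewrite /= ?xU ?exy.
  apply/esym/negP => /and3P [/andP [xS xU] yS exy].
  have := hD2 x y xU (subsetP SU _ yS) exy; rewrite xyD /=.
  case yxD: ((y, x) \in D) => // _.
  by move: (sk _ _ yxD); rewrite yS.
Qed.

Lemma count_fix U S : S \subset U ->
  #|[set D | acycU U D & S \subset sinks D]| = if indep S then aU (U :\: S) else 0%N.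
Proof.
move=> SU; case: ifP => Sind; last first.
  apply: eq_card0 => D; rewrite !inE.
  apply/negP => /andP [ac sk]; have [] := bij_bwd SU ac sk.
  by rewrite Sind.
rewrite /aU.
have inj : {in [set D | acycU (U :\: S) D] &, injective (fun D' => D' :|: InS U S)}.
  move=> D1 D2; rewrite !inE => /acycUP [/orientUP [h1 _] _] /acycUP [/orientUP [h2 _] _] E.
  apply/setP => [[x y]].
  have F : forall D' : {set T * T}, (forall x y, (x,y) \in D' ->
     [/\ x \in U :\: S, y \in U :\: S & e x y]) ->
     (x, y) \in D' = ((x, y) \in D' :|: InS U S) && (y \notin S).
    move=> D' h; rewrite !inE /=; case xyD: ((x, y) \in D') => /=.
      by have [_ ] := h _ _ xyD; rewrite inE => /andP [-> _].
    by case: (y \in S); rewrite ?andbF.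
  by rewrite (F D1 h1) (F D2 h2) E.
rewrite -(card_in_imset inj).
apply: eq_card => D; rewrite inE; apply/idP/imsetP.
  move=> /andP [ac sk]; have [_ ac' ->] := bij_bwd SU ac sk.
  by exists (restr S D); rewrite ?inE.
by move=> [D' ]; rewrite inE => ac' ->; apply: bij_fwd.
Qed.

Lemma key_sum U (t : rat) :
  \sum_(D | acycU U D) t ^+ #|U :&: sinks D| =
  \sum_(S : {set T} | S \subset U)
     (t - 1) ^+ #|S| * (if indep S then aU (U :\: S) else 0%N)%:R.
Proof.
under eq_bigr => D _ do rewrite pow_card_sub.
rewrite (exchange_big_dep (fun S : {set T} => S \subset U)) /=; last first.
  by move=> D S _ /subset_trans; apply; apply: subsetIl.
apply: eq_bigr => S SU; rewrite -(count_fix SU).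
rewrite (eq_bigl (fun D => D \in [set D | acycU U D & S \subset sinks D])); last first.
  by move=> D; rewrite inE subsetI SU.
by rewrite sumr_const mulr_natr.
Qed.

Lemma acyc0 D : acycU set0 D = (D == set0).
Proof.
apply/idP/eqP => [/acycUP [/orientUP [h _] _] | ->].
  by apply/setP => [[x y]]; rewrite inE; apply/negP => /h []; rewrite inE.
apply/acycUP; split.
  by apply/orientUP; split => x y; rewrite ?inE.
by move=> x y; rewrite inE.
Qed.

Lemma alt_sum U :
  \sum_(S : {set T} | S \subset U)
     (-1) ^+ #|S| * (if indep S then aU (U :\: S) else 0%N)%:R = (U == set0)%:R :> rat.
Proof.
have := key_sum U 0; rewrite sub0r => <-.
case: (eqVneq U set0) => [-> | Un].
  rewrite (eq_bigl (pred1 set0)) ?big_pred1_eq ?set0I ?cards0 //.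
  by move=> D; rewrite acyc0.
apply: big1 => D ac; rewrite expr0n.
have [v vU vs] := sink_exists ac Un.
suff : (0 < #|U :&: sinks D|)%N by case: #|_|.
by apply/card_gt0P; exists v; rewrite inE vU.
Qed.

End Orient.
Lemma ordE n (a b : 'I_n) : (a == b) = (val a == val b).
Proof. by []. Qed.

Section Color.
Variables (T : finType) (e : rel T).
Implicit Types (U S : {set T}).

Definition okc U m (k : {ffun T -> 'I_m.+1}) : bool :=
  [forall v, (k v == ord0) == (v \notin U)] &&
  [forall u, forall v, e u v ==> (k u != k v) || (k u == ord0)].

Definition ch U m := #|[set k : {ffun T -> 'I_m.+1} | okc U k]|.

Lemma okcP U m (k : {ffun T -> 'I_m.+1}) : reflect
  ((forall v, (k v == ord0) = (v \notin U)) /\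
   (forall u v, e u v -> k u != ord0 -> k u != k v)) (okc U k).
Proof.
apply: (iffP andP) => [[/forallP h1 /forallP h2]|[h1 h2]]; split.
- by move=> v; have /eqP := h1 v.
- move=> u v euv ku; have /forallP /(_ v) /implyP /(_ euv) := h2 u.
  by rewrite (negbTE ku) orbF.
- by apply/forallP => v; rewrite h1.
- apply/forallP => u; apply/forallP => v; apply/implyP => euv.
  case: (eqVneq (k u) ord0) => [->|ku]; first by rewrite orbT.
  rewrite orbF.
  by rewrite (h2 u v euv ku).
Qed.

Lemma ch0 U : ch U 0 = (U == set0).
Proof.
rewrite /ch; case: (eqVneq U set0) => [->|Un] /=.
  rewrite (eq_card (B := predT)); last first.
    move=> k; rewrite !inE; apply/okcP; split.
      by move=> v; rewrite inE ord1 eqxx.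
    by move=> u v _; rewrite ord1 eqxx.
  by rewrite card_ffun card_ord exp1n.
apply: eq_card0 => k; rewrite inE; apply/negP => /okcP [h _].
case/set0Pn: Un => v vU; have := h v; rewrite vU ord1 eqxx //.
Qed.

Section Step.
Variable m : nat.

Definition top (k : {ffun T -> 'I_m.+2}) := [set v | k v == ord_max].

Definition gS S (k : {ffun T -> 'I_m.+1}) : {ffun T -> 'I_m.+2} :=
  [ffun v => if v \in S then ord_max else widen_ord (leqnSn m.+1) (k v)].

Lemma top_props U (k : {ffun T -> 'I_m.+2}) : okc U k ->
  top k \subset U /\ indep e (top k).
Proof.
move=> /okcP [h1 h2]; split.
  apply/subsetP => v; rewrite inE => /eqP kv.
  by apply/negPn; rewrite -h1 kv.
apply/forallP => u; apply/forallP => v; apply/implyP; rewrite !inE.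
move=> /andP [/eqP ku /eqP kv]; apply/negP => euv.
by move: (h2 u v euv); rewrite ku kv eqxx => /(_ isT).
Qed.

Lemma count_top U S : S \subset U ->
  #|[set k | okc U k & top k == S]| = if indep e S then ch (U :\: S) m else 0%N.
Proof.
move=> SU; case: ifP => Sind; last first.
  apply: eq_card0 => k; rewrite !inE; apply/negP => /andP [ok /eqP tS].
  by have [_] := top_props ok; rewrite tS Sind.
have maxne0 : (ord_max : 'I_m.+2) != ord0 by [].
have inj : {in [set k | okc (U :\: S) k] &, injective (gS S)}.
  move=> k1 k2; rewrite !inE => /okcP [h1 _] /okcP [h2 _] E.
  apply/ffunP => v; case vS: (v \in S).
    have := h1 v; have := h2 v; rewrite inE vS /= => /eqP -> /eqP -> //.
  have := congr1 (fun f : {ffun T -> 'I_m.+2} => val (f v)) E.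
  by rewrite !ffunE vS /= => /val_inj.
rewrite /ch -(card_in_imset inj).
apply: eq_card => k; rewrite inE; apply/idP/imsetP.
  move=> /andP [/okcP [h1 h2] /eqP tS].
  have kS : forall v, (k v == ord_max) = (v \in S) by move=> v; rewrite -tS inE.
  exists [ffun v => if v \in S then ord0 else inord (k v)].
    rewrite inE; apply/okcP; split.
      move=> v; rewrite ffunE inE; case vS: (v \in S) => /=; first by rewrite eqxx.
      rewrite -h1 !ordE /= inordK //.
      have := ltn_ord (k v); rewrite ltnS leq_eqVlt => /orP [/eqP kvm|//].
      by move: (kS v); rewrite ordE /= kvm eqxx vS.
    move=> u v euv; rewrite !ffunE.
    case uS: (u \in S); first by rewrite eqxx.
    case vS: (v \in S) => /=.
      by move=> h.
    move=> ku; have kum : (k u < m.+1)%N.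
      have := ltn_ord (k u); rewrite ltnS leq_eqVlt => /orP [/eqP kvm|//].
      by move: (kS u); rewrite ordE /= kvm eqxx uS.
    have kvm : (k v < m.+1)%N.
      have := ltn_ord (k v); rewrite ltnS leq_eqVlt => /orP [/eqP kvm|//].
      by move: (kS v); rewrite ordE /= kvm eqxx vS.
    rewrite ordE /= !inordK //.
    rewrite -ordE; apply: h2 => //.
    by move: ku; rewrite !ordE /= inordK.
  apply/ffunP => v; rewrite !ffunE; case vS: (v \in S).
    by apply/eqP; rewrite kS.
  apply/val_inj => /=; rewrite inordK //.
  have := ltn_ord (k v); rewrite ltnS leq_eqVlt => /orP [/eqP kvm|//].
  by move: (kS v); rewrite ordE /= kvm eqxx vS.
move=> [k' ]; rewrite inE => /okcP [h1 h2] ->.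
apply/andP; split; last first.
  apply/eqP/setP => v; rewrite inE ffunE.
  case: (v \in S); first by rewrite eqxx.
  by rewrite ordE /= ltn_eqF.
apply/okcP; split.
  move=> v; rewrite ffunE; case vS: (v \in S).
    by rewrite (negbTE maxne0) (subsetP SU).
  by move: (h1 v); rewrite !ordE /= => ->; rewrite inE vS.
move=> u v euv; rewrite !ffunE.
case uS: (u \in S); case vS: (v \in S) => //.
- by move/forallP: Sind => /(_ u) /forallP /(_ v); rewrite uS vS euv.
- by move=> _; rewrite ordE /= gtn_eqF.
- by move=> _; rewrite ordE /= ltn_eqF.
rewrite !ordE /= => ku; move: (h2 u v euv); rewrite !ordE /=; apply.
by [].
Qed.

Lemma ch_rec U : ch U m.+1 = (\sum_(S : {set T} | S \subset U)
    (if indep e S then ch (U :\: S) m else 0%N))%N.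
Proof.
rewrite /ch -sum1_card.
rewrite (partition_big top (fun S => S \subset U)) /=; last first.
  by move=> k; rewrite inE => /top_props [].
apply: eq_bigr => S SU; rewrite -(count_top SU) -sum1_card.
by apply: eq_bigl => k; rewrite !inE.
Qed.

End Step.
End Color.
Section PolyCh.
Variables (T : finType) (e : rel T).
Hypothesis esymm : ssrbool.symmetric e.
Implicit Types (U S : {set T}).

Lemma indep0 : indep e set0.
Proof. by apply/forallP => x; apply/forallP => y; rewrite inE. Qed.

Lemma sign_split U S : S \subset U ->
  (-1) ^+ #|U| * (-1) ^+ #|S| = (-1) ^+ #|U :\: S| :> rat.
Proof.
move=> SU; rewrite -(cardsID S U) (setIidPr SU) exprD.
rewrite mulrC mulrA -exprMn mulrNN mulr1 expr1n mul1r //.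
Qed.

Lemma poly_ch_aux n : forall U, (#|U| <= n)%N ->
  exists p : {poly rat}, (forall m : nat, p.[m%:R] = (ch e U m)%:R) /\
     p.[-1] = (-1) ^+ #|U| * (aU e U)%:R.
Proof.
elim: n => [|n IH] U hU.
  have U0 : U = set0 by apply/eqP; rewrite -cards_eq0 -leqn0.
  exists 1; split.
    move=> m; rewrite hornerC.
    suff -> : ch e U m = 1%N by [].
    rewrite /ch U0; rewrite (eq_card (B := pred1 [ffun=> ord0])) ?card1 //.
    move=> k; rewrite !inE; apply/okcP/eqP => [[h _]|->].
      by apply/ffunP => v; rewrite ffunE; apply/eqP; rewrite h inE.
    by split => [v|u v _]; rewrite ?ffunE ?eqxx ?inE.
  rewrite hornerC U0 cards0 expr0 mul1r /aU.
  rewrite (eq_card (B := pred1 set0)) ?card1 //.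
  by move=> D; rewrite inE acyc0.
have hS : forall S : {set T}, exists p : {poly rat},
    (S \subset U) && (S != set0) ->
    (forall m : nat, p.[m%:R] = (ch e (U :\: S) m)%:R) /\
     p.[-1] = (-1) ^+ #|U :\: S| * (aU e (U :\: S))%:R.
  move=> S; case h: ((S \subset U) && (S != set0)); last by exists 0.
  case/andP: h => SU Sn.
  have : (#|U :\: S| <= n)%N.
    have := cardsID S U; rewrite (setIidPr SU) => E.
    have : (0 < #|S|)%N by rewrite card_gt0.
    by move: hU; rewrite -E; case: #|S| => // k; rewrite addSn ltnS => h1 _; apply: leq_trans h1; apply: leq_addl.
  by move=> /IH [p hp]; exists p.
have [pf hpf] := fin_all_exists hS.
pose r := \sum_(S : {set T} | (S \subset U) && (S != set0)) (if indep e S then pf S else 0).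
have [P hP] := AD_all r.
have hr : forall x, r.[x] = \sum_(S : {set T} | (S \subset U) && (S != set0))
    (if indep e S then (pf S).[x] else 0).
  move=> x; rewrite /r horner_sum; apply: eq_bigr => S _.
  by case: ifP => _; rewrite ?horner0.
exists (P - (P.[0])%:P + ((U == set0)%:R)%:P); split.
  elim=> [|m IHm].
    by rewrite !hornerE ch0 subrr add0r.
  have E1 : (P - (P.[0])%:P + ((U == set0)%:R)%:P).[m.+1%:R] =
            (P - (P.[0])%:P + ((U == set0)%:R)%:P).[m%:R] + r.[m%:R].
    rewrite !hornerE -(hP m%:R) -natr1; ring.
  rewrite E1 IHm hr ch_rec natr_sum [in RHS](bigD1 set0) ?sub0set //= indep0 setD0.
  congr (_ + _); apply: eq_bigr => S /andP [SU Sn].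
  case: ifP => // _.
  by have [-> _] := hpf S (introT andP (conj SU Sn)).
have E1 := hP (-1); rewrite addNr in E1.
rewrite !hornerE.
have A := alt_sum esymm U.
rewrite (bigD1 set0) ?sub0set //= indep0 setD0 cards0 expr0 mul1r in A.
have E2 : r.[-1] = \sum_(S : {set T} | (S \subset U) && (S != set0))
   (-1) ^+ #|U| * ((-1) ^+ #|S| * (if indep e S then aU e (U :\: S) else 0%N)%:R).
  rewrite hr; apply: eq_bigr => S /andP [SU Sn].
  rewrite mulrA sign_split //; case: ifP => _; last by rewrite mulr0.
  by have [_ ->] := hpf S (introT andP (conj SU Sn)).
have E3 : (U == set0)%:R = (-1) ^+ #|U| * (U == set0)%:R :> rat.
  by case: (eqVneq U set0) => [->|_]; rewrite ?cards0 ?expr0 ?mul1r ?mulr0.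
have E4 : P.[-1] - P.[0] = - r.[-1] by rewrite -E1; ring.
rewrite E4 E2 -mulr_sumr E3 -A; ring.
Qed.

Lemma poly_ch U : exists p : {poly rat},
  (forall m : nat, p.[m%:R] = (ch e U m)%:R) /\
     p.[-1] = (-1) ^+ #|U| * (aU e U)%:R.
Proof. exact: (@poly_ch_aux #|U|). Qed.

End PolyCh.
Lemma mmap_comp n (R : nzRingType) (S S' : comNzRingType) (g : {rmorphism S -> S'})
  (f : R -> S) (h : 'I_n -> S) (p : {mpoly R[n]}) :
  g (mmap f h p) = mmap (g \o f) (g \o h) p.
Proof.
rewrite /mmap rmorph_sum; apply: eq_bigr => m _.
rewrite rmorphM /mmap1 rmorph_prod; congr (_ * _); apply: eq_bigr => i _.
by rewrite rmorphXn.
Qed.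

Lemma eq_mmap n (R S : nzRingType) (f1 f2 : R -> S) (h1 h2 : 'I_n -> S) (p : {mpoly R[n]}) :
  f1 =1 f2 -> h1 =1 h2 -> mmap f1 h1 p = mmap f2 h2 p.
Proof.
move=> ef eh; rewrite /mmap; apply: eq_bigr => m _.
by rewrite (mmap1_eq _ eh) ef.
Qed.

Lemma sum_binom_1 (R : comNzRingType) (x : R) j :
  \sum_(1 <= a < j.+1) x ^+ a *+ 'C(j, a) = (1 + x) ^+ j - 1.
Proof.
rewrite [1 + x]addrC exprD1n big_ord_recl /= expr0 bin0 big_add1 /= big_mkord.
by rewrite addrC addKr.
Qed.

Lemma zetaE N j : zeta N j = \sum_(i < N) ((1 + 'X_i) ^+ j - 1).
Proof.
rewrite /zeta /psum.
transitivity (\sum_(i < N) \sum_(1 <= a < j.+1) ('X_i : {mpoly rat[N]}) ^+ a *+ 'C(j, a)).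
  rewrite exchange_big; apply: eq_bigr => a _.
  by rewrite scaler_nat sumrMnl.
by apply: eq_bigr => i _; rewrite sum_binom_1.
Qed.

Lemma meval_zeta N (v : 'I_N -> rat) j :
  meval v (zeta N j) = \sum_(i < N) ((1 + v i) ^+ j - 1).
Proof.
rewrite zetaE rmorph_sum; apply: eq_bigr => i _.
by rewrite rmorphB rmorphXn rmorphD /= meval1 mevalXU.
Qed.

Lemma meval_eval_zeta M N (v : 'I_N -> rat) (Q : {mpoly rat[M]}) :
  meval v (eval_zeta N Q) = meval (fun j => meval v (zeta N j.+1)) Q.
Proof.
rewrite /eval_zeta.
change (fun c : rat => c%:MP) with (@mpolyC N rat).
rewrite (mmap_comp (meval v)) /meval; apply: eq_mmap => // c /=.
exact: mevalC.
Qed.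

Lemma meval_chromsym (T : finType) (e : rel T) N (v : 'I_N -> rat) :
  meval v (chromsym e N) =
  \sum_(k : {ffun T -> 'I_N} | proper_coloring e k) \prod_(x : T) v (k x).
Proof.
rewrite /chromsym rmorph_sum; apply: eq_bigr => k _.
rewrite rmorph_prod; apply: eq_bigr => x _.
exact: mevalXU.
Qed.

Lemma horner_mmap M (Q : {mpoly rat[M]}) (h : 'I_M -> {poly rat}) (c : rat) :
  (mmap (@polyC rat) h Q).[c] = meval (fun j => (h j).[c]) Q.
Proof.
rewrite -horner_evalE (mmap_comp (horner_eval c)) /meval.
by apply: eq_mmap => // x /=; rewrite horner_evalE hornerC.
Qed.

Definition Wp M (Q : {mpoly rat[M]}) : {poly rat} :=
  mmap (@polyC rat) (fun j : 'I_M => 'X^(j.+1)) Q.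

Lemma Wp_coef M (Q : {mpoly rat[M]}) k : (Wp Q)`_k = coef_sum_weight Q k.
Proof.
rewrite /Wp /mmap /coef_sum_weight coef_sum [RHS]big_mkcond /=.
apply: eq_bigr => m _.
have -> : mmap1 (fun j : 'I_M => 'X^(j.+1)) m = 'X^(zeta_weight m) :> {poly rat}.
  rewrite /mmap1 /zeta_weight.
  under eq_bigr => i _ do rewrite -exprM.
  by rewrite prodrXr.
by rewrite coefCM coefXn eq_sym; case: ifP; rewrite ?mulr1 ?mulr0.
Qed.
Section Main2.
Variables (T : finType) (e : rel T).
Hypothesis esymm : ssrbool.symmetric e.

Lemma color_decomp m (t : rat) :
  \sum_(k : {ffun T -> 'I_m.+1} | proper_coloring e k)
     \prod_(x : T) (if val (k x) == 0%N then t - 1 else -1)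
  = \sum_(S : {set T} | indep e S)
      ((t - 1) ^+ #|S| * (-1) ^+ #|~: S|) * (ch e (~: S) m)%:R.
Proof.
rewrite (partition_big (fun k : {ffun T -> 'I_m.+1} => [set v | k v == ord0]) (indep e)) /=;
  last first.
  move=> k /forallP pk; apply/forallP => x; apply/forallP => y; apply/implyP.
  rewrite !inE => /andP [/eqP kx /eqP ky]; apply/negP => exy.
  by have /forallP /(_ y) /implyP /(_ exy) := pk x; rewrite kx ky eqxx.
apply: eq_bigr => S Sind.
rewrite (eq_bigr (fun _ => (t - 1) ^+ #|S| * (-1) ^+ #|~: S|)); last first.
  move=> k /andP [_ /eqP kS].
  rewrite (bigID (mem S)) /=; congr (_ * _).
    rewrite -prodr_const; apply: eq_bigr => x xS.
    by move: xS; rewrite -kS inE ordE => ->.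
  rewrite -prodr_const; apply: eq_big => x; first by rewrite inE.
  by rewrite -kS inE ordE /= => /negbTE ->.
rewrite (eq_bigl (mem [set k : {ffun T -> 'I_m.+1} | okc e (~: S) k])); last first.
  move=> k; rewrite !inE; apply/andP/okcP => [[/forallP pk /eqP kS]|[h1 h2]].
    split.
      by move=> v; rewrite -kS !inE negbK.
    move=> u v euv _.
    by have /forallP /(_ v) /implyP := pk u; apply.
  split.
    apply/forallP => u; apply/forallP => v; apply/implyP => euv.
    case: (eqVneq (k u) ord0) => ku; last by apply: h2.
    case: (eqVneq (k v) ord0) => kv; last by rewrite ku eq_sym.
    move: (h1 u) (h1 v); rewrite ku kv !inE !negbK eqxx => uS vS.
    by have /forallP /(_ v) := (forallP Sind) u; rewrite -uS -vS euv.
  by apply/eqP/setP => v; rewrite !inE h1 inE negbK.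
by rewrite sumr_const mulr_natr.
Qed.


Lemma sign_sq n : (-1) ^+ n * (-1) ^+ n = 1 :> rat.
Proof. by rewrite -exprMn mulrNN mulr1 expr1n. Qed.

Lemma part2 M (Q : {mpoly rat[M]}) : represents_chromsym e Q ->
  forall k, (num_acyclic_sinks e k)%:R = coef_sum_weight Q k.
Proof.
move=> rep.
pose A : {poly rat} := \sum_(D : {set T * T} | acyclic_orientation e D) 'X^#|sinks D|.
have key : forall t, (Wp Q).[t] = A.[t].
  move=> t.
  have Wt : (Wp Q).[t] = meval (fun j => t ^+ j.+1) Q.
    by rewrite /Wp horner_mmap; apply: meval_eq => j; rewrite hornerXn.
  pose G := mmap (@polyC rat) (fun j : 'I_M => (t ^+ j.+1)%:P - 'X) Q.
  have Gc : forall c, G.[c] = meval (fun j => t ^+ j.+1 - c) Q.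
    move=> c; rewrite horner_mmap; apply: meval_eq => j.
    by rewrite hornerD hornerN hornerC hornerX.
  have Gm : forall m : nat, G.[m.+1%:R] = \sum_(S : {set T} | indep e S)
      ((t - 1) ^+ #|S| * (-1) ^+ #|~: S|) * (ch e (~: S) m)%:R.
    move=> m; rewrite Gc -color_decomp.
    pose v := fun i : 'I_m.+1 => if val i == 0%N then t - 1 else -1.
    transitivity (meval v (chromsym e m.+1)); last by rewrite meval_chromsym.
    rewrite -(rep m.+1) meval_eval_zeta; apply: meval_eq => j.
    rewrite meval_zeta big_ord_recl /=.
    rewrite (eq_bigr (fun _ => -1)); last first.
      by move=> i _; rewrite /v /= subrr expr0n /= sub0r.
    rewrite sumr_const card_ord /v /=.
    have -> : 1 + (t - 1) = t by ring.
    by rewrite mulNrn -natr1; ring.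
  have := fun S : {set T} => poly_ch esymm (~: S).
  move=> /fin_all_exists [pS hpS].
  pose H := \sum_(S : {set T} | indep e S)
      ((t - 1) ^+ #|S| * (-1) ^+ #|~: S|) *: (pS S \Po ('X - 1)).
  have Hc : forall c, H.[c] = \sum_(S : {set T} | indep e S)
      ((t - 1) ^+ #|S| * (-1) ^+ #|~: S|) * (pS S).[c - 1].
    move=> c; rewrite horner_sum; apply: eq_bigr => S _.
    by rewrite hornerZ horner_comp !hornerE.
  have GH : (G - H) \Po ('X + 1) = 0.
    apply: poly_nat_eq0 => m.
    rewrite horner_comp (_ : ('X + 1).[m%:R] = m.+1%:R); last by rewrite !hornerE natr1.
    rewrite hornerD hornerN Gm Hc.
    rewrite -natr1 addrK; apply/eqP; rewrite subr_eq0; apply/eqP.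
    apply: eq_bigr => S _; have [-> _] := hpS S; by [].
  have := congr1 (horner^~ (-1)) GH; rewrite /= horner0 horner_comp.
  rewrite (_ : ('X + 1).[-1] = 0); last by rewrite !hornerE addNr.
  rewrite hornerD hornerN => /eqP; rewrite subr_eq0 => /eqP G0.
  have -> : (Wp Q).[t] = G.[0] by rewrite Gc Wt; apply: meval_eq => j; rewrite subr0.
  rewrite G0 Hc.
  have -> : A.[t] = \sum_(D | acycU e setT D) t ^+ #|setT :&: sinks D|.
    rewrite /A horner_sum; apply: eq_big => D; first by rewrite acycT.
    by rewrite setTI hornerXn.
  rewrite key_sum // [RHS]big_mkcond [LHS]big_mkcond; apply: eq_bigr => S _.
  rewrite subsetT /= setTD; case: ifP => _; last by rewrite mulr0.
  have [_ E] := hpS S; rewrite ?sub0r E -!mulrA; congr (_ * _).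
  by rewrite mulrA sign_sq mul1r.
have WA : Wp Q = A.
  apply/eqP; rewrite -subr_eq0; apply/eqP/poly_nat_eq0 => n.
  by rewrite hornerD hornerN key subrr.
move=> k; rewrite -Wp_coef WA /A coef_sum /num_acyclic_sinks -sum1_card natr_sum.
rewrite [LHS]big_mkcond [RHS]big_mkcond; apply: eq_bigr => D _.
rewrite !inE coefXn eq_sym; case: (acyclic_orientation e D) => //=.
by case: (_ == _).
Qed.

End Main2.
Lemma binom_inv (R : comNzRingType) (x : R) c K : (0 < c)%N -> (c <= K)%N ->
  \sum_(i < K) (('C(c, i.+1))%:R * (-1) ^+ (c - i.+1)) * ((1 + x) ^+ i.+1 - 1) = x ^+ c.
Proof.
move=> c0 cK.
pose F (a : nat) := (('C(c, a))%:R * (-1) ^+ (c - a)) * ((1 + x) ^+ a - 1) : R.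
have -> : \sum_(i < K) (('C(c, i.+1))%:R * (-1) ^+ (c - i.+1)) * ((1 + x) ^+ i.+1 - 1)
        = \sum_(a < K.+1) F a.
  by rewrite big_ord_recl /F /= expr0 subrr mulr0 add0r.
have -> : \sum_(a < K.+1) F a = \sum_(a < c.+1) F a.
  rewrite [RHS](big_ord_widen (K.+1) F) ?ltnS // [RHS]big_mkcond /=.
  apply: eq_bigr => i _; case: ifP => // /negbT; rewrite -leqNgt => ci.
  by rewrite /F bin_small // mul0r mul0r.
rewrite /F.
have E1 : forall y : R, (-1 + y) ^+ c = \sum_(a < c.+1) ('C(c, a))%:R * (-1) ^+ (c - a) * y ^+ a.
  move=> y; rewrite exprDn; apply: eq_bigr => i _.
  by rewrite mulr_natl mulrnAl mulrC.
have E2 := E1 (1 + x); have E3 := E1 1.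
rewrite addrA addNr add0r in E2; rewrite addNr expr0n (gtn_eqF c0) /= in E3.
under eq_bigr => i _ do rewrite mulrBr mulr1.
rewrite sumrB -E2.
have E4 : \sum_(a < c.+1) ('C(c, a))%:R * (-1) ^+ (c - a) = 0 :> R.
  transitivity (\sum_(a < c.+1) ('C(c, a))%:R * (-1) ^+ (c - a) * (1 : R) ^+ a).
    by apply: eq_bigr => i _; rewrite expr1n mulr1.
  by rewrite -E3.
by rewrite E4 subr0.
Qed.
Section Comp.
Variables (T : finType) (F : {set T * T}).

Definition frel : rel T := fun x y => ((x, y) \in F) || ((y, x) \in F).
Lemma frel_csym : connect_sym frel.
Proof. by apply: sym_connect_sym => x y; rewrite /frel orbC. Qed.
Definition rt := fingraph.root frel.
Definition cnt w := #|[set v | rt v == w]|.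
Lemma rtK v : rt (rt v) = rt v.
Proof. exact: (root_root frel_csym). Qed.

Lemma constP N (k : {ffun T -> 'I_N}) :
  [forall p in F, k p.1 == k p.2] = [forall v, k v == k (rt v)].
Proof.
apply/forallP/forallP => h.
  have hr : forall x y, frel x y -> k x = k y.
    move=> x y /orP [xy|yx].
      by have /implyP /(_ xy) /eqP := h (x, y).
    by have /implyP /(_ yx) /eqP := h (y, x).
  move=> v; apply/eqP; rewrite /rt; have /connectP [p pth ->] := connect_root frel v.
  elim: p v pth => [|z p IH] v //= /andP [vz pth].
  by rewrite (hr _ _ vz); apply: IH.
move=> [x y]; apply/implyP => xy /=.
have : connect frel x y by apply: connect1; rewrite /frel xy.
move=> /(fingraph.rootP frel_csym) ry.
by have /eqP -> := h x; have /eqP -> := h y; rewrite /rt ry.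
Qed.

Lemma cnt_root w : rt w == w -> (1 <= cnt w <= #|T|)%N.
Proof.
move=> /eqP rw; rewrite max_card andbT; apply/card_gt0P; exists w.
by rewrite inE rw.
Qed.

Lemma cnt_nonroot w : rt w != w -> cnt w = 0%N.
Proof.
move=> rw; apply: eq_card0 => v; rewrite inE; apply/negP => /eqP E.
by move: rw; rewrite -E rtK eqxx.
Qed.

Lemma Y_eq N :
  \sum_(k : {ffun T -> 'I_N} | [forall p in F, k p.1 == k p.2]) \prod_v 'X_(k v)
  = \prod_(w | rt w == w) psum N (cnt w) :> {mpoly rat[N]}.
Proof.
case: N => [|N].
  case: (pickP (@predT T)) => [v _|T0].
    rewrite big1; last by move=> k _; case: (k v).
    rewrite (bigD1 (rt v)) ?rtK //= /psum big_ord0 mul0r //.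
  rewrite big_pred0; last first.
    by move=> v; have := T0 v.
  rewrite (eq_bigl predT); last by move=> k; apply/forallP => [[x y]]; have := T0 x.
  rewrite (eq_bigr (fun _ => 1)); last by move=> k _; rewrite big_pred0.
  by rewrite sumr_const card_ffun card_ord /= (eq_card0 T0).
pose Q := fun v : T => if rt v == v then predT else pred1 (ord0 : 'I_N.+1).
pose Phi := fun g : {ffun T -> 'I_N.+1} => [ffun v => g (rt v)].
have inj : {in family Q &, injective Phi}.
  move=> g1 g2 /familyP h1 /familyP h2 E; apply/ffunP => w.
  case rw: (rt w == w).
    have := congr1 (fun f : {ffun T -> 'I_N.+1} => f w) E.
    by rewrite !ffunE (eqP rw).
  by have := h1 w; have := h2 w; rewrite /Q rw /= => /eqP -> /eqP ->.
rewrite (eq_bigl (mem (Phi @: family Q))); last first.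
  move=> k; rewrite constP /=; apply/forallP/imsetP => [h|[g _ ->] v].
    exists [ffun v => if rt v == v then k v else ord0].
      by apply/familyP => v; rewrite ffunE /Q; case: ifP.
    apply/ffunP => v; rewrite !ffunE rtK eqxx; apply/eqP; exact: h.
  by rewrite !ffunE rtK.
rewrite big_imset //=.
transitivity (\sum_(g in family Q) \prod_w (('X_(g w)) ^+ (cnt w) : {mpoly rat[N.+1]})).
  apply: eq_bigr => g _.
  rewrite (partition_big rt predT) //=; apply: eq_bigr => w _.
  rewrite (eq_bigr (fun _ => 'X_(g w))); last first.
    by move=> v /eqP rv; rewrite ffunE rv.
  rewrite prodr_const; congr (_ ^+ _).
  by apply: eq_card => v; rewrite !inE.
rewrite -(bigA_distr_big_dep Q (fun w j => ('X_j : {mpoly rat[N.+1]}) ^+ cnt w)).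
rewrite [RHS]big_mkcond; apply: eq_bigr => w _.
rewrite /Q; case: ifP => rw; first by rewrite /psum.
by rewrite big_pred1_eq cnt_nonroot ?rw // expr0.
Qed.

End Comp.
Lemma prod_1m (R : comNzRingType) (I : finType) (A : {set I}) (b : I -> R) :
  \prod_(i in A) (1 - b i) =
  \sum_(J : {set I} | J \subset A) (-1) ^+ #|J| * \prod_(i in J) b i.
Proof.
rewrite big_mkcond /=.
transitivity (\prod_i ((if i \in A then - b i else 0) + 1)).
  by apply: eq_bigr => i _; case: ifP => _; rewrite ?add0r // addrC.
rewrite bigA_distr (bigID (fun J : {set I} => J \subset A)) /=.
rewrite [X in _ + X]big1 ?addr0; last first.
  move=> J /subsetPn [i iJ iA]; rewrite (bigD1 i) //= iJ (negbTE iA) mul0r //.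
apply: eq_bigr => J JA.
rewrite -prodrN [RHS]big_mkcond /=.
apply: eq_bigr => i _; case: ifP => // iJ.
by rewrite (subsetP JA _ iJ).
Qed.

Lemma prod_ind (R : comNzRingType) (I : finType) (J : {set I}) (P : pred I) :
  \prod_(i in J) ((P i)%:R : R) = ([forall i in J, P i])%:R.
Proof.
case: (boolP [forall i in J, P i]) => [/forall_inP h | /forall_inPn [i iJ Pi]].
  by apply: big1 => i iJ; rewrite h.
by rewrite (bigD1 i) //= (negbTE Pi) mul0r.
Qed.

Section Exist.
Variables (T : finType) (e : rel T).

Definition Eset := [set p : T * T | e p.1 p.2].

Lemma chrom_expand N : chromsym e N =
  \sum_(F : {set T * T} | F \subset Eset)
     (-1) ^+ #|F| * \prod_(w | rt F w == w) psum N (cnt F w).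
Proof.
rewrite /chromsym.
transitivity (\sum_(k : {ffun T -> 'I_N})
   (\prod_(p in Eset) (1 - ((k p.1 == k p.2)%:R : {mpoly rat[N]}))) * \prod_v 'X_(k v)).
  rewrite [LHS]big_mkcond; apply: eq_bigr => k _.
  rewrite (eq_bigr (fun p => ((k p.1 != k p.2)%:R : {mpoly rat[N]}))); last first.
    by move=> p _; case: (_ == _); rewrite ?subrr ?subr0.
  rewrite prod_ind.
  have -> : [forall (p | p \in Eset), k p.1 != k p.2] = proper_coloring e k.
    apply/forall_inP/forallP => [h u|h [u v]].
      by apply/forallP => v; apply/implyP => euv; apply: (h (u, v)); rewrite inE.
    by rewrite inE /= => euv; have /forallP /(_ v) /implyP := h u; apply.
  by case: (proper_coloring e k); rewrite ?mul1r ?mul0r.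
under eq_bigr => k _ do rewrite prod_1m big_distrl /=.
rewrite (exchange_big_dep (fun J : {set T * T} => J \subset Eset)) //=.
apply: eq_bigr => F FE.
rewrite (eq_bigl (fun _ => true)); last by move=> k; rewrite FE.
rewrite -Y_eq mulr_sumr [RHS]big_mkcond; apply: eq_bigr => k _.
rewrite prod_ind; case: ifP => _; by rewrite ?mulr1 ?mulr0 ?mul0r.
Qed.

End Exist.

Definition Pc M c : {mpoly rat[M]} :=
  \sum_(i < M) (('C(c, i.+1))%:R * (-1) ^+ (c - i.+1)) *: 'X_i.

Lemma eval_Pc M N c : (0 < c)%N -> (c <= M)%N -> eval_zeta N (Pc M c) = psum N c.
Proof.
move=> c0 cM; rewrite /eval_zeta.
change (fun c : rat => c%:MP) with (@mpolyC N rat).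
rewrite /Pc raddf_sum /=.
under eq_bigr => i _ do rewrite mmapZ mmapX mmap1U zetaE mulr_sumr.
rewrite exchange_big /psum; apply: eq_bigr => j _.
rewrite -(binom_inv ('X_j : {mpoly rat[N]}) c0 cM); apply: eq_bigr => i _.
by rewrite rmorphM rmorph_nat rmorphXn rmorphN1.
Qed.

Lemma existence (T : finType) (e : rel T) :
  exists (M : nat) (Q : {mpoly rat[M]}), represents_chromsym e Q.
Proof.
exists #|T|.
exists (\sum_(F : {set T * T} | F \subset Eset e)
     (-1) ^+ #|F| *: \prod_(w | rt F w == w) Pc #|T| (cnt F w)).
move=> N; rewrite chrom_expand /eval_zeta.
change (fun c : rat => c%:MP) with (@mpolyC N rat).
rewrite raddf_sum /=; apply: eq_bigr => F _.
rewrite mmapZ rmorphXn rmorphN1 rmorph_prod; congr (_ * _).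
apply: eq_bigr => w rw.
have /andP [c1 cT] := cnt_root rw.
exact: eval_Pc.
Qed.

Unset Implicit Arguments.

Theorem theorem3p7 (T : finType) (e : rel T) :
  simple_graph e ->
  (exists (M : nat) (Q : {mpoly rat[M]}), represents_chromsym e Q) /\
  (forall (M : nat) (Q : {mpoly rat[M]}), represents_chromsym e Q ->
     forall k : nat, (num_acyclic_sinks e k)%:R = coef_sum_weight Q k).
Proof.
move=> [esymm _]; split; first exact: existence.
move=> M Q rep k; exact: (part2 esymm rep).
Qed.
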